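(* In the one-vs-all multi-class setting, let $\hat c$ be the clean predicted class of test node $t$. For each $c\in[K]$ let $P^c$ denote the feasible set of the sample-wise MILP constraints (with binary labels $\mathbf{y}^c$ in place of $\mathbf{y}$ and budget $\lfloor\epsilon m\rfloor$, big-M values $M_{u_i}=\sum_jC|Q_{ij}|-1$, $M_{v_i}=\sum_jC|Q_{ij}|+1$), namely variables $\boldsymbol{\alpha},\tilde{\mathbf{y}},\mathbf{z},\mathbf{u},\mathbf{v}\in\mathbb{R}^m$, $\mathbf{y}',\mathbf{s},\mathbf{t}\in\{0,1\}^m$, $\mathbf{R}\in\mathbb{R}^{m\times m}$ with $\sum_i(1-y^c_i\tilde y_i)\le2\lfloor\epsilon m\rfloor$ and for all $i,j$: $\tilde y_i=2y_i'-1$, $\sum_jR_{ij}Q_{ij}-1-u_i+v_i=0$, $u_i,v_i\ge0$, $-C(1+\tilde y_i)\le R_{ij}+z_j\le C(1+\tilde y_i)$, $-C(1-\tilde y_i)\le R_{ij}-z_j\le C(1-\tilde y_i)$, $-\alpha_i\le z_i\le\alpha_i$, $\alpha_i-C(1-\tilde y_i)\le z_i\le C(1+\tilde y_i)-\alpha_i$, $u_i\le M_{u_i}s_i$, $\alpha_i\le C(1-s_i)$, $v_i\le M_{v_i}t_i$, $\alpha_i\ge Ct_i$. Let $m_{\hat c}=\min_{P^{\hat c}}\sum_iz_iQ_{ti}$ and, for $c\ne\hat c$, $M_c=\max_{P^c}\sum_iz_iQ_{ti}$. If $m_{\hat c}>\max_{c\ne\hat c}M_c$, then the prediction for $t$ is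 certifiably robust, i.e. $p_{\hat c}(\tilde{\mathbf{y}})-\max_{c\ne\hat c}p_c(\tilde{\mathbf{y}})>0$ for all $\tilde{\mathbf{y}}\in\mathcal{A}(\mathbf{y})$.
   Context: Setting: $K$ classes, $m$ labeled nodes, $C>0$, symmetric positive semidefinite kernel $\mathbf{Q}$ on labeled nodes and kernel values $Q_{ti}$ of test node $t$. For $\mathbf{w}\in\{-1,1\}^m$ the bias-free SVM dual is $\min_{\boldsymbol\alpha}-\sum_i\alpha_i+\tfrac12\sum_{i,j}w_iw_j\alpha_i\alpha_jQ_{ij}$ s.t. $0\le\alpha_i\le C$, with solution set $\mathcal{S}(\mathbf{w})$. For $\tilde{\mathbf{y}}\in[K]^m$, $\tilde{\mathbf{y}}^c\in\{-1,1\}^m$ has $\tilde y^c_i=1$ iff $\tilde y_i=c$, and $p_c(\tilde{\mathbf{y}})=\sum_i\tilde y^c_i\alpha^c_iQ_{ti}$ for $\boldsymbol\alpha^c\in\mathcal{S}(\tilde{\mathbf{y}}^c)$; the predicted class is $\arg\max_cp_c$. $\mathbf{y}^c$ is defined analogously from the clean labels $\mathbf{y}\in[K]^m$. $\mathcal{A}(\mathbf{y})=\{\tilde{\mathbf{y}}\in[K]^m:\|\tilde{\mathbf{y}}-\mathbf{y}\|_0\le\lfloor\epsilon m\rfloor\}$. *)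

(* Defs.v *)
From HB Require Import structures.
From mathcomp Require Import all_boot all_order all_algebra.
From mathcomp Require Import reals.
Set Implicit Arguments. Unset Strict Implicit. Unset Printing Implicit Defensive.
Import Order.TTheory GRing.Theory Num.Theory.
Local Open Scope ring_scope.

Section Defs.
Variables (R : realType) (K m : nat).

Definition binlab (yy : 'I_m -> 'I_K) (c : 'I_K) : 'I_m -> R :=
  fun i => if yy i == c then 1 else -1.

(* bias-free SVM dual objective *)
Definition svm_obj (Q : 'M[R]_m) (w a : 'I_m -> R) : R :=
  - (\sum_i a i) + 2^-1 * \sum_i \sum_j w i * w j * a i * a j * Q i j.

Definition svm_box (C : R) (a : 'I_m -> R) : Prop := forall i, 0 <= a i <= C.

Definition svm_sol (C : R) (Q : 'M[R]_m) (w a : 'I_m -> R) : Prop :=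
  svm_box C a /\ forall b, svm_box C b -> svm_obj Q w a <= svm_obj Q w b.

Definition pscore (Qt : 'I_m -> R) (w a : 'I_m -> R) : R :=
  \sum_i w i * a i * Qt i.

Definition budget (eps : R) : int := Num.floor (eps * m%:R).

Definition in_attack (eps : R) (y yt : 'I_m -> 'I_K) : Prop :=
  (#|[set i | yt i != y i]|%:Z <= budget eps)%R.

Definition is01 (x : R) : Prop := x = 0 \/ x = 1.

Definition milp_feas (C : R) (Q : 'M[R]_m) (yc : 'I_m -> R) (eps : R)
  (alpha yt z u v y' s t : 'I_m -> R) (Rm : 'I_m -> 'I_m -> R) : Prop :=
  let Mu i := \sum_j C * `|Q i j| - 1 in
  let Mv i := \sum_j C * `|Q i j| + 1 in
  (\sum_i (1 - yc i * yt i) <= 2 * (budget eps)%:~R) /\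
  (forall i, [/\ is01 (y' i), is01 (s i) & is01 (t i)]) /\
  (forall i, yt i = 2 * y' i - 1) /\
  (forall i, \sum_j Rm i j * Q i j - 1 - u i + v i = 0 /\ 0 <= u i /\ 0 <= v i) /\
  (forall i j, - (C * (1 + yt i)) <= Rm i j + z j <= C * (1 + yt i)
               /\ - (C * (1 - yt i)) <= Rm i j - z j <= C * (1 - yt i)) /\
  (forall i, - alpha i <= z i <= alpha i
               /\ alpha i - C * (1 - yt i) <= z i <= C * (1 + yt i) - alpha i) /\
  (forall i, [/\ u i <= Mu i * s i, alpha i <= C * (1 - s i),
                    v i <= Mv i * t i & alpha i >= C * t i]).

Definition milp_value (C : R) (Q : 'M[R]_m) (Qt : 'I_m -> R) (yc : 'I_m -> R)
  (eps : R) (x : R) : Prop :=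
  exists alpha yt z u v y' s t Rm,
    milp_feas C Q yc eps alpha yt z u v y' s t Rm /\ x = \sum_i z i * Qt i.

Definition is_min_of (P : R -> Prop) (x : R) : Prop :=
  P x /\ forall y, P y -> x <= y.
Definition is_max_of (P : R -> Prop) (x : R) : Prop :=
  P x /\ forall y, P y -> y <= x.

End Defs.

(* Main.v *)
Require Import Defs.
From HB Require Import structures.
From mathcomp Require Import all_boot all_order all_algebra.
From mathcomp Require Import reals ring lra.
Import Order.TTheory GRing.Theory Num.Theory.
Set Implicit Arguments. Unset Strict Implicit.
Local Open Scope ring_scope.

Lemma sum_delta (R : realType) (m : nat) (i : 'I_m) (d : R) (F : 'I_m -> R) :
  \sum_k (if k == i then d else 0) * F k = d * F i.
Proof.
rewrite (bigD1 i) //= eqxx big1 ?addr0 // => k /negbTE ->; by rewrite mul0r.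
Qed.

Lemma obj_pert (R : realType) (m : nat) (Q : 'M[R]_m)
  (HQs : forall i j, Q j i = Q i j) (w a : 'I_m -> R) (i : 'I_m) (d : R) :
  svm_obj Q w (fun k => a k + (if k == i then d else 0)) =
  svm_obj Q w a + d * (\sum_j w i * w j * a j * Q i j - 1)
    + 2^-1 * (d * (d * (w i * w i * Q i i))).
Proof.
rewrite /svm_obj.
set D := fun k : 'I_m => if k == i then d else 0.
have E1 : \sum_k (a k + D k) = \sum_k a k + d.
  rewrite big_split /=; congr (_ + _).
  have := sum_delta i d (fun _ => 1); rewrite mulr1 => <-.
  by apply: eq_bigr => k _; rewrite mulr1.
have E2 : \sum_k \sum_l w k * w l * (a k + D k) * (a l + D l) * Q k l =
   \sum_k \sum_l w k * w l * a k * a l * Q k l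
   + \sum_k D k * (\sum_l w k * w l * a l * Q k l)
   + \sum_l D l * (\sum_k w k * w l * a k * Q k l)
   + \sum_k D k * (\sum_l D l * (w k * w l * Q k l)).
  have -> : \sum_l D l * (\sum_k w k * w l * a k * Q k l) =
     \sum_k \sum_l D l * (w k * w l * a k * Q k l).
    rewrite exchange_big /=; apply: eq_bigr => l _; by rewrite mulr_sumr.
  rewrite -!big_split /=; apply: eq_bigr => k _.
  rewrite !mulr_sumr -!big_split /=; apply: eq_bigr => l _; ring.
rewrite E1 E2 !sum_delta.
have -> : \sum_k w k * w i * a k * Q k i = \sum_j w i * w j * a j * Q i j.
  by apply: eq_bigr => k _; rewrite HQs; ring.
by field.
Qed.

Lemma kkt (R : realType) (m : nat) (C : R) (Q : 'M[R]_m)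
  (HQs : forall i j, Q j i = Q i j) (w a : 'I_m -> R) :
  svm_sol C Q w a -> forall i,
  (0 < \sum_j w i * w j * a j * Q i j - 1 -> a i = 0) /\
  (\sum_j w i * w j * a j * Q i j - 1 < 0 -> a i = C).
Proof.
move=> [Hbox Hopt] i.
set g := \sum_j w i * w j * a j * Q i j - 1.
set q := w i * w i * Q i i.
have Hq : q <= `|q| by apply: ler_norm.
have Hq1 : 0 < `|q| + 1 by have := normr_ge0 q; lra.
have /andP [a0 aC] := Hbox i.
have pert : forall d, 0 <= a i + d <= C ->
    0 <= d * g + 2^-1 * (d * (d * q)).
  move=> d hd.
  have hb : svm_box C (fun k => a k + (if k == i then d else 0)).
    move=> k; case: (k =P i) => [->|_]; first by [].
    by rewrite addr0; apply: Hbox.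
  have := Hopt _ hb; rewrite obj_pert // -/g -/q; lra.
split => hg.
- apply/eqP; rewrite eq_le a0 andbT leNgt; apply/negP => ha.
  pose e := g / (`|q| + 1).
  have he : 0 < e by apply: divr_gt0.
  have he' : e * (`|q| + 1) = g by rewrite /e mulfVK // gt_eqF.
  pose d := if a i <= e then a i else e.
  have hd0 : 0 < d by rewrite /d; case: ifP.
  have hda : d <= a i by rewrite /d; case: ifP => // /negbT; rewrite -ltNge => /ltW.
  have hde : d <= e by rewrite /d; case: ifP.
  have hdg : d * (`|q| + 1) <= g by rewrite -he' ler_pM2r.
  have := pert (- d); rewrite -/q.
  have -> : (0 <= a i + - d <= C) = true by apply/andP; split; lra.
  move=> /(_ isT) h.
  have h2 : d * (d * q) <= d * (d * `|q|) by rewrite ler_pM2l // ler_pM2l.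
  have h3 : d * (d * (`|q| + 1)) <= d * g by rewrite ler_pM2l.
  nra.
- apply/eqP; rewrite eq_le aC /= leNgt; apply/negP => ha.
  pose e := - g / (`|q| + 1).
  have he : 0 < e by apply: divr_gt0; lra.
  have he' : e * (`|q| + 1) = - g by rewrite /e mulfVK // gt_eqF.
  pose d := if C - a i <= e then C - a i else e.
  have hd0 : 0 < d by rewrite /d; case: ifP => //; lra.
  have hda : d <= C - a i by rewrite /d; case: ifP => // /negbT; rewrite -ltNge => /ltW.
  have hde : d <= e by rewrite /d; case: ifP.
  have hdg : d * (`|q| + 1) <= - g by rewrite -he' ler_pM2r.
  have := pert d; rewrite -/q.
  have -> : (0 <= a i + d <= C) = true by apply/andP; split; lra.
  move=> /(_ isT) h.
  have h2 : d * (d * q) <= d * (d * `|q|) by rewrite ler_pM2l // ler_pM2l.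
  have h3 : d * (d * (`|q| + 1)) <= d * - g by rewrite ler_pM2l.
  nra.
Qed.

Lemma feas (R : realType) (m : nat) (C : R) (Q : 'M[R]_m) (Qt : 'I_m -> R)
  (HQs : forall i j, Q j i = Q i j) (w a : 'I_m -> R) (yc : 'I_m -> R) (eps : R) :
  (forall i, w i = 1 \/ w i = -1) -> svm_sol C Q w a ->
  \sum_i (1 - yc i * w i) <= 2 * (budget m eps)%:~R ->
  milp_value C Q Qt yc eps (pscore Qt w a).
Proof.
move=> Hw Hs Hb.
have HK := kkt HQs Hs.
have Hbox := Hs.1.
pose g i := \sum_j w i * w j * a j * Q i j - 1.
have Hg : forall i, - (\sum_j C * `|Q i j|) <= \sum_j w i * w j * a j * Q i j <=
                    \sum_j C * `|Q i j|.
  move=> i; rewrite -ler_norml.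
  apply: le_trans (ler_norm_sum _ _ _) _; apply: ler_sum => j _.
  have /andP [a0 aC] := Hbox j.
  rewrite !normrM (ger0_norm a0).
  have -> : `|w i| = 1 by case: (Hw i) => ->; rewrite ?normrN normr1.
  have -> : `|w j| = 1 by case: (Hw j) => ->; rewrite ?normrN normr1.
  by rewrite !mul1r ler_wpM2r.
exists a, w, (fun k => w k * a k),
  (fun k => if 0 < g k then g k else 0), (fun k => if g k < 0 then - g k else 0),
  (fun k => if w k == 1 then 1 else 0),
  (fun k => if 0 < g k then 1 else 0), (fun k => if g k < 0 then 1 else 0),
  (fun i j => w i * (w j * a j)).
split; last first.
  by [].
have Hn1 : ((-1 : R) == 1) = false by apply/eqP; lra.
split; first exact: Hb.
split.
  move=> i; split; rewrite /is01; by [case: ifP => _; [right|left] | case: ifP => _; [right|left] | case: ifP => _; [right|left]].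
split.
  move=> i; case: (Hw i) => ->; rewrite ?eqxx ?Hn1; lra.
split.
  move=> i.
  have -> : \sum_j w i * (w j * a j) * Q i j = g i + 1.
    rewrite /g subrK; apply: eq_bigr => j _; ring.
  case: (ltrgtP 0 (g i)) => hg.
  + split; [lra|split; lra].
  + split; [lra|split; lra].
  + rewrite -hg; split; [lra|split; lra].
split.
  move=> i j; have /andP [a0 aC] := Hbox j.
  case: (Hw i) => ->; case: (Hw j) => ->; split; apply/andP; split; lra.
split.
  move=> i; have /andP [a0 aC] := Hbox i.
  case: (Hw i) => ->; split; apply/andP; split; lra.
move=> i; have /andP [a0 aC] := Hbox i.
have /andP [gl gu] := Hg i.
have [K1 K2] := HK i.
case: (ltrgtP 0 (g i)) => hg.
+ have := K1 hg => ai; rewrite ai.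
  split; rewrite /g in hg *; lra.
+ have := K2 hg => ai; rewrite ai.
  split; rewrite /g in hg *; lra.
+ split; lra.
Qed.

Lemma budget_ok (R : realType) (K m : nat) (eps : R) (y yt : 'I_m -> 'I_K) (c : 'I_K) :
  in_attack eps y yt ->
  \sum_i (1 - binlab R y c i * binlab R yt c i) <= 2 * (budget m eps)%:~R.
Proof.
rewrite /in_attack => Hat.
apply: (@le_trans _ _ (\sum_i (if yt i != y i then 2 else 0))).
  apply: ler_sum => i _; rewrite /binlab.
  case: (yt i =P y i) => [->|_] /=; first by case: ifP => _; lra.
  by case: ifP => _; case: ifP => _; lra.
rewrite -big_mkcond /= sumr_const.
have -> : #|[pred i | yt i != y i]| = #|[set i | yt i != y i]| by rewrite cardsE.
have -> : (2 : R) *+ #|[set i | yt i != y i]| = 2 * #|[set i | yt i != y i]|%:R.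
  by rewrite mulr_natr.
rewrite ler_pM2l //.
by rewrite pmulrn ler_int.
Qed.


Unset Implicit Arguments.
Set Strict Implicit.

Theorem mainTheorem7 (R : realType) (K m : nat) (C eps : R)
  (Q : 'M[R]_m) (Qt : 'I_m -> R) (y : 'I_m -> 'I_K) (chat : 'I_K) :
  0 < C ->
  Q^T = Q ->
  (forall x : 'rV[R]_m, 0 <= (x *m Q *m x^T) 0 0) ->
  (* chat is the clean predicted class *)
  (exists alpha0 : 'I_K -> 'I_m -> R,
      (forall c, svm_sol C Q (binlab R y c) (alpha0 c)) /\
      forall c, pscore Qt (binlab R y c) (alpha0 c)
                <= pscore Qt (binlab R y chat) (alpha0 chat)) ->
  (* m_chat = min over P^chat, M_c = max over P^c, and m_chat > max_{c<>chat} M_c *)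
  (exists mhat : R,
      is_min_of (milp_value C Q Qt (binlab R y chat) eps) mhat /\
      forall c, c != chat ->
        exists Mc : R, is_max_of (milp_value C Q Qt (binlab R y c) eps) Mc /\ Mc < mhat) ->
  forall yt : 'I_m -> 'I_K, in_attack eps y yt ->
  forall alpha : 'I_K -> 'I_m -> R,
    (forall c, svm_sol C Q (binlab R yt c) (alpha c)) ->
    forall c, c != chat ->
      pscore Qt (binlab R yt c) (alpha c) < pscore Qt (binlab R yt chat) (alpha chat).
Proof.
move=> C0 HQ _ _ [mhat [[_ Hmin] HM]] yt Hat alpha Hsol c Hc.
have HQs : forall i j, Q j i = Q i j.
  by move=> i j; have := congr1 (fun M : 'M[R]_m => M i j) HQ; rewrite mxE.
have Hw : forall c' i, binlab R yt c' i = 1 \/ binlab R yt c' i = -1.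
  by move=> c' i; rewrite /binlab; case: ifP; [left|right].
have V : forall c', milp_value C Q Qt (binlab R y c') eps
                      (pscore Qt (binlab R yt c') (alpha c')).
  move=> c'; apply: feas; [exact: HQs | exact: Hw | exact: Hsol | exact: budget_ok].
have [Mc [[_ HMc] lt]] := HM c Hc.
have h1 := Hmin _ (V chat).
have h2 := HMc _ (V c).
apply: le_lt_trans h2 _; exact: lt_le_trans lt h1.
Qed.
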